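(* Let $D\subseteq\mathbb{R}$, let $f:D\to\mathbb{R}$ be ordinal decreasing, and let $g(x)=f(x)-x$ for $x\in D$. Then $g$ is ordinal decreasing and $o(g)\le o(f)$.
   Context: For $h:D\to\mathbb{R}$, a strictly decreasing sequence $x_1>x_2>\cdots$ in $D$ is $h$-bad if $h(x_1)>h(x_2)>\cdots$; $h$ is ordinal decreasing if there is no infinite $h$-bad sequence. For ordinal decreasing $h$, the tree $T_h$ has a vertex for each finite $h$-bad sequence (the empty sequence being the root), the parent of $\langle x_1>\cdots>x_n\rangle$ being $\langle x_1>\cdots>x_{n-1}\rangle$; each vertex gets the ordinal height $o(v)=\sup_{w\text{ child of }v}(o(w)+1)$, and $o(h)$ is the height of the root. *)

(* Defs.v *)
From Stdlib Require Import Reals List.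
Import ListNotations.
Open Scope R_scope.

(* D : R -> Prop is the domain; h : R -> R, only its values on D matter. *)

Fixpoint bad (D : R -> Prop) (h : R -> R) (s : list R) : Prop :=
  match s with
  | [] => True
  | x :: t =>
      D x /\ match t with
             | [] => True
             | y :: _ => y < x /\ h y < h x
             end /\ bad D h t
  end.

Definition infinite_bad (D : R -> Prop) (h : R -> R) (x : nat -> R) : Prop :=
  forall n, D (x n) /\ x (S n) < x n /\ h (x (S n)) < h (x n).

Definition ordinal_decreasing (D : R -> Prop) (h : R -> R) : Prop :=
  ~ exists x : nat -> R, infinite_bad D h x.

(* Ordinals as well-founded trees (Brouwer trees with arbitrary branching):
   [osup I F] denotes sup_{i : I} (F i + 1). *)
Inductive Ord : Type :=
  osup : forall Ix : Type, (Ix -> Ord) -> Ord.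

(* a <= b  iff  every F i + 1 <= b, i.e. every F i < b, i.e. F i <= G j for some j *)
Fixpoint ord_le (a b : Ord) {struct a} : Prop :=
  match a with
  | osup Ix F =>
      forall i : Ix, match b with
                    | osup J G => exists j : J, ord_le (F i) (G j)
                    end
  end.

(* Vertices of T_h are the finite h-bad lists; the children of s are the
   bad lists s ++ [x].  [height D h s a] : the ordinal height o(s) of the
   vertex s is (represented by) a, i.e. a = sup_{children w} (o(w) + 1). *)
Inductive height (D : R -> Prop) (h : R -> R) : list R -> Ord -> Prop :=
  | height_intro : forall (s : list R)
      (F : {x : R | bad D h (s ++ [x])} -> Ord),
      (forall w, height D h (s ++ [proj1_sig w]) (F w)) ->
      height D h s (osup _ F).

(* Main.v *)
Require Import Defs.
From Stdlib Require Import Reals List Lra Classical ClassicalEpsilon.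
Import ListNotations.
Open Scope R_scope.

Definition step (D : R -> Prop) (h : R -> R) (y x : R) : Prop :=
  D y /\ y < x /\ h y < h x.

Lemma acc_all (D : R -> Prop) (h : R -> R) :
  ordinal_decreasing D h -> forall x, D x -> Acc (step D h) x.
Proof.
  intros Hod x Dx. apply NNPP; intro Hn.
  set (P := fun x => D x /\ ~ Acc (step D h) x).
  assert (Hnext : forall z : {x | P x},
             {y : {x | P x} | step D h (proj1_sig y) (proj1_sig z)}).
  { intros [z [Dz Hz]]. apply constructive_indefinite_description.
    apply NNPP; intro H. apply Hz. constructor. intros y Hy.
    apply NNPP; intro Hy'. apply H.
    exists (exist _ y (conj (proj1 Hy) Hy')). exact Hy. }
  set (nxt := fun z => proj1_sig (Hnext z)).
  set (sq := fun n => proj1_sig (Nat.iter n nxt (exist P x (conj Dx Hn)))).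
  apply Hod. exists sq. intro n.
  unfold sq. simpl.
  destruct (Nat.iter n nxt (exist P x (conj Dx Hn))) as [z Pz].
  unfold nxt. destruct (Hnext (exist P z Pz)) as [y Hy]. simpl in *.
  destruct Hy as [_ [H1 H2]]. split; [exact (proj1 Pz)|]. split; assumption.
Qed.

Lemma bad_last (D : R -> Prop) (h : R -> R) s x y :
  bad D h (s ++ [x; y]) -> step D h y x.
Proof.
  induction s as [|a s IH]; simpl.
  - intros [_ [[H1 H2] [Dy _]]]. split; [exact Dy|]. split; assumption.
  - intros [_ [_ H]]. apply IH. exact H.
Qed.

Lemma bad_gf (D : R -> Prop) (f : R -> R) s :
  bad D (fun x => f x - x) s -> bad D f s.
Proof.
  induction s as [|a s IH]; simpl; auto.
  intros [Da [H1 H2]]. split; auto. split; auto.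
  destruct s; auto. destruct H1. split; auto. lra.
Qed.

Lemma height_exists (D : R -> Prop) (h : R -> R) x :
  Acc (step D h) x -> forall s, bad D h (s ++ [x]) -> exists a, height D h (s ++ [x]) a.
Proof.
  induction 1 as [x _ IH]. intros s Hs.
  assert (Hc : forall w : {y : R | bad D h ((s ++ [x]) ++ [proj1_sig (exist (fun _ => True) y I)])}, True) by auto.
  clear Hc.
  assert (Hw : forall w : {y : R | bad D h ((s ++ [x]) ++ [y])},
             exists a, height D h ((s ++ [x]) ++ [proj1_sig w]) a).
  { intros [y Hy]. simpl. apply IH.
    - apply (bad_last D h s). rewrite <- app_assoc in Hy. exact Hy.
    - exact Hy. }
  exists (osup _ (fun w => proj1_sig (constructive_indefinite_description _ (Hw w)))).
  constructor. intro w.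
  exact (proj2_sig (constructive_indefinite_description _ (Hw w))).
Qed.

Lemma height_inv (D : R -> Prop) (h : R -> R) s b :
  height D h s b -> exists F : {x : R | bad D h (s ++ [x])} -> Ord,
    b = osup _ F /\ forall w, height D h (s ++ [proj1_sig w]) (F w).
Proof. intros H; destruct H; eauto. Qed.

Lemma cmp (D : R -> Prop) (f : R -> R) s a :
  height D (fun x => f x - x) s a -> forall b, height D f s b -> ord_le a b.
Proof.
  induction 1 as [s F HF IH]. intros b Hb.
  destruct (height_inv _ _ _ _ Hb) as [G [-> HG]].
  simpl. intros [y Hy].
  exists (exist _ y (bad_gf D f _ Hy)).
  apply (IH (exist _ y Hy)). apply (HG (exist _ y (bad_gf D f _ Hy))).
Qed.

Theorem lemma8 (D : R -> Prop) (f : R -> R) :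
  ordinal_decreasing D f ->
  let g := fun x => f x - x in
  ordinal_decreasing D g /\
  (exists a, height D g nil a) /\
  (forall a b, height D g nil a -> height D f nil b -> ord_le a b).
Proof.
  intros Hf g.
  assert (Hg : ordinal_decreasing D g).
  { intros [x Hx]. apply Hf. exists x. intro n. destruct (Hx n) as [H1 [H2 H3]].
    unfold g in H3. split; auto. split; auto. lra. }
  split; [exact Hg|]. split.
  - assert (Hw : forall w : {y : R | bad D g ([] ++ [y])},
               exists a, height D g ([] ++ [proj1_sig w]) a).
    { intros [y Hy]. simpl. refine (height_exists D g y _ [] _).
      - apply acc_all; [exact Hg|]. exact (proj1 Hy).
      - exact Hy. }
    exists (osup _ (fun w => proj1_sig (constructive_indefinite_description _ (Hw w)))).
    constructor. intro w.
    exact (proj2_sig (constructive_indefinite_description _ (Hw w))).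
  - intros a b Ha Hb. exact (cmp D f [] a Ha b Hb).
Qed.
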